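(* Let $\beta>0$, $\gamma\in(\frac12,1)$, $c_0=\frac{(2\beta)^{1/\gamma}}{4\gamma}$, $\varkappa=\frac32-\frac1{2\gamma}$, let $\eta>0$ and $U=(0,\eta)$. For $\varepsilon\in U$ put $Z_2(\varepsilon)=\frac1{5\varepsilon^{2/3}}$, and put $Z_2(0)=+\infty$. For $\varepsilon\in U\cup\{0\}$ and $z\in[-Z_2(\varepsilon),-1]$ define $$\widehat T(z,\varepsilon)=\begin{pmatrix}0&T_{12}(z,\varepsilon)\\ T_{21}(z,\varepsilon)&0\end{pmatrix},$$ $$T_{12}(z,\varepsilon)=\int_{-Z_2(\varepsilon)}^z\frac{ds}{4s(1+i\varepsilon^{1/3}\sqrt{-s})}\exp\Big(\int_s^z\frac{2ic_0\sqrt{-\sigma}\,d\sigma}{(1-\varepsilon^{2/3}\sigma)^{\varkappa}}\Big),\quad T_{21}(z,\varepsilon)=\int_{-Z_2(\varepsilon)}^z\frac{ds}{4s(1-i\varepsilon^{1/3}\sqrt{-s})}\exp\Big(-\int_s^z\frac{2ic_0\sqrt{-\sigma}\,d\sigma}{(1-\varepsilon^{2/3}\sigma)^{\varkappa}}\Big).$$ Then there exists $c_{IV}>0$ such that $\|\widehat T(z,\varepsilon)\|<\frac{c_{IV}}{|z|^{3/2}}$ for every $\varepsilon\in U\cup\{0\}$ and $z\in[-Z_2(\varepsilon),-1]$. *)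

(* Defs.v *)
From Stdlib Require Import Reals.
From Coquelicot Require Import Coquelicot.
Open Scope R_scope.

(* real power x^y for x >= 0, y > 0, with the convention 0^y = 0
   (Stdlib's Rpower 0 y = 1, which would be wrong at eps = 0). *)
Definition rpow (x y : R) : R := if Rle_dec x 0 then 0 else Rpower x y.

Definition cexp (w : C) : C :=
  (RtoC (exp (Re w)) * (RtoC (cos (Im w)) + Ci * RtoC (sin (Im w))))%C.

Definition c0 (beta gamma : R) : R := Rpower (2 * beta) (1 / gamma) / (4 * gamma).
Definition kappa (gamma : R) : R := 3 / 2 - 1 / (2 * gamma).

(* Z_2(eps) = 1 / (5 eps^{2/3}) for eps > 0 (eps = 0 means Z_2 = +oo, handled separately) *)
Definition Z2 (eps : R) : R := 1 / (5 * rpow eps (2 / 3)).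

Definition inner (beta gamma eps s z : R) : C :=
  RInt (V := C_R_CompleteNormedModule)
    (fun sigma : R => (2 * Ci * RtoC (c0 beta gamma) * RtoC (sqrt (- sigma))
       / RtoC (Rpower (1 - rpow eps (2 / 3) * sigma) (kappa gamma)))%C) s z.

Definition f12 (beta gamma eps z : R) (s : R) : C :=
  (cexp (inner beta gamma eps s z)
     / (4 * RtoC s * (1 + Ci * RtoC (rpow eps (1 / 3)) * RtoC (sqrt (- s)))))%C.
Definition f21 (beta gamma eps z : R) (s : R) : C :=
  (cexp (- inner beta gamma eps s z)
     / (4 * RtoC s * (1 - Ci * RtoC (rpow eps (1 / 3)) * RtoC (sqrt (- s)))))%C.

Definition is_T (eps z : R) (f : R -> C) (l : C) : Prop :=
  if Req_EM_T eps 0 then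
    is_RInt_gen (V := C_R_CompleteNormedModule) f (Rbar_locally m_infty) (at_point z) l
  else is_RInt (V := C_R_CompleteNormedModule) f (- Z2 eps) z l.

(* norm of the antidiagonal matrix [[0, a], [b, 0]]: max of the moduli of the
   entries (this is both the max-entry norm and the operator 2-norm here) *)
Definition antidiag_norm (a b : C) : R := Rmax (Cmod a) (Cmod b).

Definition in_range (eps z : R) : Prop :=
  z <= -1 /\ (eps = 0 \/ - Z2 eps <= z).

(* Main.v *)
Require Import Defs.
From Stdlib Require Import Reals Lra.
From Coquelicot Require Import Coquelicot.
Open Scope R_scope.
Lemma cont_mult (f g : R -> R) x : continuous f x -> continuous g x -> continuous (fun y => f y * g y) x.
Proof. intros; apply (continuous_mult f g); auto. Qed.
Lemma cont_plus (f g : R -> R) x : continuous f x -> continuous g x -> continuous (fun y => f y + g y) x.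
Proof. intros; apply (continuous_plus f g); auto. Qed.
Lemma cont_opp (f : R -> R) x : continuous f x -> continuous (fun y => - f y) x.
Proof. intros; apply (continuous_opp f); auto. Qed.
Lemma cont_comp (f g : R -> R) x : continuous f x -> continuous g (f x) -> continuous (fun y => g (f y)) x.
Proof. intros; apply (continuous_comp f g); auto. Qed.
Lemma cont_der (f : R -> R) x l : is_derive f x l -> continuous f x.
Proof. intros h. apply (ex_derive_continuous (K:=R_AbsRing) (V:=R_NormedModule) f). exists l; exact h. Qed.
Lemma cont_sin x : continuous sin x. Proof. apply (cont_der _ _ _ (is_derive_sin x)). Qed.
Lemma cont_cos x : continuous cos x. Proof. apply (cont_der _ _ _ (is_derive_cos x)). Qed.
Lemma ex_RInt_cR (f : R -> R) a b : (forall z, Rmin a b <= z <= Rmax a b -> continuous f z) -> ex_RInt f a b.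
Proof. intros h. apply (ex_RInt_continuous (V:=R_CompleteNormedModule)). exact h. Qed.

Lemma is_derive_eq (f : R -> R) x l l' : is_derive f x l -> l = l' -> is_derive f x l'.
Proof. intros h e; subst; exact h. Qed.

Lemma ibp_gen (a b : R) (H dH Phi g : R -> R) (tr tr' : R -> R) (dtr : forall x, is_derive tr x (tr' x))
  (ctr : forall x, continuous tr' x) :
  a <= b ->
  (forall x, a <= x <= b -> is_derive H x (dH x)) ->
  (forall x, a <= x <= b -> continuous dH x) ->
  (forall x, a <= x <= b -> is_derive Phi x (- g x)) ->
  (forall x, a <= x <= b -> continuous g x) ->
  is_RInt (fun x => H x * g x * tr' (Phi x)) a b
     (H a * tr (Phi a) - H b * tr (Phi b) + RInt (fun x => dH x * tr (Phi x)) a b).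
Proof.
  intros hab hH hdH hP hg.
  assert (hmm : forall x, Rmin a b <= x <= Rmax a b -> a <= x <= b).
  { intros x; rewrite Rmin_left, Rmax_right; auto. }
  assert (hF : is_RInt (fun x => dH x * tr (Phi x) + H x * (- g x * tr' (Phi x))) a b
     (minus (H b * tr (Phi b)) (H a * tr (Phi a)))).
  { apply (is_RInt_derive (fun x => H x * tr (Phi x))).
    - intros x hx. apply hmm in hx. eapply is_derive_eq.
      apply (is_derive_mult H (fun x => tr (Phi x))). auto.
      apply (is_derive_comp tr Phi). apply dtr. auto.
      intros; apply Rmult_comm. unfold plus, mult, scal; simpl. unfold mult; simpl. ring.
    - intros x hx. apply hmm in hx.
      apply cont_plus. apply cont_mult. auto.
      apply cont_comp. eapply cont_der; eauto. apply (cont_der _ _ _ (dtr _)).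
      apply cont_mult. eapply cont_der; eauto.
      apply cont_mult. apply cont_opp; auto.
      apply cont_comp. eapply cont_der; eauto. apply ctr. }
  assert (hE : ex_RInt (fun x => dH x * tr (Phi x)) a b).
  { apply ex_RInt_cR. intros x hx. apply hmm in hx.
    apply cont_mult. auto.
    apply cont_comp. eapply cont_der; eauto. apply (cont_der _ _ _ (dtr _)). }
  pose proof (is_RInt_minus _ _ _ _ _ _ (RInt_correct _ _ _ hE) hF) as h.
  eapply is_RInt_ext; [| replace (H a * tr (Phi a) - H b * tr (Phi b) + RInt (fun x => dH x * tr (Phi x)) a b) with
     (minus (RInt (fun x => dH x * tr (Phi x)) a b) (minus (H b * tr (Phi b)) (H a * tr (Phi a)))); [exact h|]].
  - intros x _. unfold minus, plus, opp; simpl. ring.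
  - unfold minus, plus, opp; simpl. ring.
Qed.

Lemma ibp_rem (a b : R) (H dH k : R -> R) :
  a <= b ->
  (forall x, a <= x <= b -> is_derive H x (dH x)) ->
  (forall x, a <= x <= b -> continuous dH x) ->
  (forall x, a <= x <= b -> continuous k x) ->
  (forall x, a <= x <= b -> Rabs (k x) <= 1) ->
  ((forall x, a <= x <= b -> 0 <= dH x) \/ (forall x, a <= x <= b -> dH x <= 0)) ->
  Rabs (RInt (fun x => dH x * k x) a b) <= Rabs (H b - H a).
Proof.
  intros hab hH hdH hk hk1 hs.
  assert (hmm : forall x, Rmin a b <= x <= Rmax a b -> a <= x <= b).
  { intros x; rewrite Rmin_left, Rmax_right; auto. }
  assert (hD : is_RInt dH a b (minus (H b) (H a))).
  { apply (is_RInt_derive (V:=R_CompleteNormedModule)); intros x hx; apply hmm in hx; auto. }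
  assert (hE : ex_RInt (fun x => dH x * k x) a b).
  { apply ex_RInt_cR. intros x hx. apply hmm in hx. apply cont_mult; auto. }
  destruct hs as [hs|hs].
  - assert (hp : forall x, a <= x <= b -> norm (dH x * k x) <= dH x).
    { intros x hx. unfold norm; simpl. unfold abs; simpl. rewrite Rabs_mult.
       pose proof (hk1 x hx). pose proof (hs x hx). rewrite (Rabs_right (dH x)) by lra.
       replace (dH x) with (dH x * 1) at 2 by ring. apply Rmult_le_compat_l; lra. }
    pose proof (norm_RInt_le (fun x => dH x * k x) dH a b _ _ hab hp (RInt_correct _ _ _ hE) hD) as h2.
    unfold norm in h2; simpl in h2; unfold abs in h2; simpl in h2.
    unfold minus, plus, opp in h2; simpl in h2. eapply Rle_trans; [exact h2|].
    apply Rle_abs.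
  - assert (hp : forall x, a <= x <= b -> norm (dH x * k x) <= opp (dH x)).
    { intros x hx. unfold norm, opp; simpl. unfold abs; simpl. rewrite Rabs_mult.
       pose proof (hk1 x hx). pose proof (hs x hx). rewrite (Rabs_left1 (dH x)) by lra.
       replace (- dH x) with (- dH x * 1) at 2 by ring. apply Rmult_le_compat_l; lra. }
    pose proof (norm_RInt_le (fun x => dH x * k x) (fun x => opp (dH x)) a b _ _ hab hp (RInt_correct _ _ _ hE) (is_RInt_opp _ _ _ _ hD)) as h2.
    unfold norm in h2; simpl in h2; unfold abs in h2; simpl in h2.
    unfold minus, plus, opp in h2; simpl in h2. eapply Rle_trans; [exact h2|].
    rewrite <- Rabs_Ropp. apply Rle_abs.
Qed.
Lemma ex_der_cont (f : R -> R) x : ex_derive f x -> continuous f x.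
Proof. intros h. apply (ex_derive_continuous (K:=R_AbsRing) (V:=R_NormedModule) f). exact h. Qed.

Definition Hfun (K q e m s : R) : R := K * exp (q * ln (1 - e * s) - m * ln (- s)).
Definition dHfun (K q e m s : R) : R := Hfun K q e m s * (- q * e / (1 - e * s) - m / s).
Definition gfun (c e k s : R) : R := 2 * c * sqrt (- s) / Rpower (1 - e * s) k.

Lemma Hfun_der K q e m s : s < 0 -> 0 <= e -> is_derive (Hfun K q e m) s (dHfun K q e m s).
Proof.
  intros hs he. unfold Hfun, dHfun. auto_derive.
  - split. nra. split; auto. lra.
  - unfold Hfun. set (E := exp _). field. split; nra.
Qed.
Lemma dHfun_cont K q e m s : s < 0 -> 0 <= e -> continuous (dHfun K q e m) s.
Proof.
  intros hs he. apply ex_der_cont. unfold dHfun, Hfun. auto_derive.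
  repeat split; try nra; try lra.
Qed.
Lemma gfun_cont c e k s : s < 0 -> 0 <= e -> continuous (gfun c e k) s.
Proof.
  intros hs he. apply ex_der_cont. unfold gfun, Rpower. auto_derive.
  repeat split; try nra; try lra. apply Rgt_not_eq, exp_pos.
Qed.

Lemma exp_le x y : x <= y -> exp x <= exp y.
Proof. intros h. destruct (Rle_lt_or_eq_dec _ _ h). left; apply exp_increasing; auto. subst; lra. Qed.

Lemma ell_nonneg q e m s : q <= 0 -> 0 <= e -> 0 <= m -> s < 0 -> 0 <= - q * e / (1 - e * s) - m / s.
Proof.
  intros. unfold Rdiv. assert (h1 : 0 < 1 - e * s) by nra.
  assert (h2 := Rinv_0_lt_compat _ h1). assert (h3 := Rinv_lt_0_compat _ H2).
  assert (0 <= - q * e) by nra. nra.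
Qed.

Lemma dH_nonneg K q e m s : 0 <= K -> q <= 0 -> 0 <= e -> 0 <= m -> s < 0 -> 0 <= dHfun K q e m s.
Proof.
  intros. unfold dHfun, Hfun. apply Rmult_le_pos. apply Rmult_le_pos; auto. left; apply exp_pos.
  apply ell_nonneg; auto.
Qed.
Lemma dH_nonpos K q e m s : K <= 0 -> q <= 0 -> 0 <= e -> 0 <= m -> s < 0 -> dHfun K q e m s <= 0.
Proof.
  intros. unfold dHfun, Hfun. pose proof (ell_nonneg q e m s H0 H1 H2 H3). pose proof (exp_pos (q * ln (1 - e * s) - m * ln (- s))).
  assert (K * exp (q * ln (1 - e * s) - m * ln (- s)) <= 0) by nra. nra.
Qed.

Lemma Hfun_bound K q e m s : q <= 0 -> 0 <= e -> s < 0 ->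
  Rabs (Hfun K q e m s) <= Rabs K * exp (- m * ln (- s)).
Proof.
  intros. unfold Hfun. rewrite Rabs_mult, (Rabs_right (exp _)) by (left; apply exp_pos).
  apply Rmult_le_compat_l. apply Rabs_pos. apply exp_le.
  assert (0 <= ln (1 - e * s)). { rewrite <- ln_1. apply ln_le; nra. }
  nra.
Qed.

Lemma exp32 u : 0 < u -> exp (3/2 * ln u) = u * sqrt u.
Proof.
  intros hu. replace (3/2 * ln u) with (ln u + / 2 * ln u) by field.
  rewrite exp_plus, exp_ln by auto. rewrite <- Rpower_sqrt by auto. reflexivity.
Qed.

Lemma expm32 u : 0 < u -> exp (- (3/2) * ln u) = / (u * sqrt u).
Proof.
  intros hu. replace (- (3/2) * ln u) with (- (3/2 * ln u)) by ring. rewrite exp_Ropp, exp32; auto.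
Qed.
Lemma expm1 u : 0 < u -> exp (- (1) * ln u) = / u.
Proof.
  intros hu. replace (- (1) * ln u) with (- (ln u)) by ring. rewrite exp_Ropp, exp_ln; auto.
Qed.

Lemma Ha_id c q e s : 0 < c -> 0 <= e -> s < 0 ->
  1 / (4 * s * (1 - e * s)) = Hfun (- / (8 * c)) q e (3/2) s * gfun c e (q + 1) s.
Proof.
  intros hc he hs. unfold Hfun, gfun, Rpower.
  assert (h1 : 0 < 1 - e * s) by nra. assert (hu : 0 < - s) by lra.
  replace (q * ln (1 - e * s) - 3 / 2 * ln (- s)) with (q * ln (1 - e * s) + (- (3/2)) * ln (- s)) by ring.
  rewrite exp_plus, expm32 by auto.
  replace ((q + 1) * ln (1 - e * s)) with (q * ln (1 - e * s) + ln (1 - e * s)) by ring.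
  rewrite exp_plus, exp_ln by auto.
  pose proof (exp_pos (q * ln (1 - e * s))). pose proof (sqrt_lt_R0 _ hu).
  field. repeat split; lra.
Qed.

Lemma Hb_id c d q e s : 0 < c -> 0 <= e -> s < 0 ->
  - (d * sqrt (- s)) / (4 * s * (1 - e * s)) = Hfun (d / (8 * c)) q e 1 s * gfun c e (q + 1) s.
Proof.
  intros hc he hs. unfold Hfun, gfun, Rpower.
  assert (h1 : 0 < 1 - e * s) by nra. assert (hu : 0 < - s) by lra.
  replace (q * ln (1 - e * s) - 1 * ln (- s)) with (q * ln (1 - e * s) + (- (1)) * ln (- s)) by ring.
  rewrite exp_plus, expm1 by auto.
  replace ((q + 1) * ln (1 - e * s)) with (q * ln (1 - e * s) + ln (1 - e * s)) by ring.
  rewrite exp_plus, exp_ln by auto.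
  pose proof (exp_pos (q * ln (1 - e * s))). pose proof (sqrt_lt_R0 _ hu).
  field. repeat split; lra.
Qed.

Lemma comp_bound_gen K q e m a b (Phi g tr tr' : R -> R)
  (dtr : forall x, is_derive tr x (tr' x)) (ctr : forall x, continuous tr' x)
  (btr : forall x, Rabs (tr x) <= 1) :
  a <= b -> b < 0 -> q <= 0 -> 0 <= e -> 0 <= m ->
  (forall x, a <= x <= b -> is_derive Phi x (- g x)) ->
  (forall x, a <= x <= b -> continuous g x) ->
  exists L, is_RInt (fun x => Hfun K q e m x * g x * tr' (Phi x)) a b L /\
    Rabs L <= 2 * (Rabs (Hfun K q e m a) + Rabs (Hfun K q e m b)).
Proof.
  intros hab hb hq he hm hP hg.
  assert (hneg : forall x, a <= x <= b -> x < 0) by (intros; lra).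
  eexists; split.
  - apply (ibp_gen a b _ (dHfun K q e m) Phi g tr tr' dtr ctr hab); auto.
    + intros x hx. apply Hfun_der; auto.
    + intros x hx. apply dHfun_cont; auto.
  - assert (hr := ibp_rem a b (Hfun K q e m) (dHfun K q e m) (fun x => tr (Phi x)) hab).
    assert (hR : Rabs (RInt (fun x => dHfun K q e m x * tr (Phi x)) a b) <= Rabs (Hfun K q e m b - Hfun K q e m a)).
    { apply hr.
      - intros x hx. apply Hfun_der; auto.
      - intros x hx. apply dHfun_cont; auto.
      - intros x hx. apply cont_comp. eapply cont_der; eauto. apply (cont_der _ _ _ (dtr _)).
      - intros; auto.
      - destruct (Rle_dec 0 K).
        + left. intros. apply dH_nonneg; auto.
        + right. intros. apply dH_nonpos; auto; lra. }
    set (Ha := Hfun K q e m a) in *. set (Hb := Hfun K q e m b) in *.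
    set (I := RInt _ a b) in *.
    pose proof (btr (Phi a)). pose proof (btr (Phi b)).
    assert (Rabs (Ha * tr (Phi a)) <= Rabs Ha).
    { rewrite Rabs_mult. pose proof (Rabs_pos Ha). pose proof (Rabs_pos (tr (Phi a))). nra. }
    assert (Rabs (Hb * tr (Phi b)) <= Rabs Hb).
    { rewrite Rabs_mult. pose proof (Rabs_pos Hb). pose proof (Rabs_pos (tr (Phi b))). nra. }
    assert (Rabs (Hb - Ha) <= Rabs Hb + Rabs Ha).
    { unfold Rminus. eapply Rle_trans. apply Rabs_triang. rewrite Rabs_Ropp. lra. }
    eapply Rle_trans. apply Rabs_triang. eapply Rle_trans. apply Rplus_le_compat_r. unfold Rminus. apply Rabs_triang.
    rewrite Rabs_Ropp. lra.
Qed.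

Lemma btr_sin x : Rabs (sin x) <= 1.
Proof. apply Rabs_le. apply SIN_bound. Qed.
Lemma btr_mcos x : Rabs (- cos x) <= 1.
Proof. rewrite Rabs_Ropp. apply Rabs_le. apply COS_bound. Qed.
Lemma dtr_mcos x : is_derive (fun x => - cos x) x (sin x).
Proof. auto_derive; auto. ring. Qed.

Lemma integrand_eq (c r p : R) : 0 < p ->
  (2 * Ci * RtoC c * RtoC r / RtoC p)%C = (0, 2 * c * r / p).
Proof. intros hp. apply injective_projections; simpl; field; lra. Qed.

Lemma Rpower_pos x y : 0 < Rpower x y.
Proof. unfold Rpower. apply exp_pos. Qed.

Lemma ex_RInt_g c e k a b : 0 <= e -> a < 0 -> b < 0 -> ex_RInt (gfun c e k) a b.
Proof.
  intros he ha hb. apply ex_RInt_cR. intros x hx. apply gfun_cont; auto.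
  destruct hx as [_ hx]. eapply Rle_lt_trans; [exact hx|]. apply Rmax_case; auto.
Qed.

Lemma is_RInt_R_eq (f : R -> R) a b l l' : is_RInt f a b l -> l = l' -> is_RInt f a b l'.
Proof. intros h e; subst; exact h. Qed.

Lemma inner_eq beta gamma eps s z : s < 0 -> z < 0 -> 0 <= rpow eps (2/3) ->
  inner beta gamma eps s z = (0, RInt (gfun (c0 beta gamma) (rpow eps (2/3)) (kappa gamma)) s z).
Proof.
  intros hs hz he. unfold inner.
  rewrite (RInt_ext (V := C_R_CompleteNormedModule) _ (fun sigma => (0, gfun (c0 beta gamma) (rpow eps (2/3)) (kappa gamma) sigma))).
  2:{ intros x _. rewrite integrand_eq by apply Rpower_pos. reflexivity. }
  apply (is_RInt_unique (V:=C_R_CompleteNormedModule)).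
  apply (is_RInt_fct_extend_pair (U:=R_NormedModule) (V:=R_NormedModule)); simpl.
  - eapply is_RInt_R_eq. apply (is_RInt_const (V:=R_NormedModule)).
    unfold scal; simpl; unfold mult; simpl; ring.
  - apply (RInt_correct (V:=R_CompleteNormedModule)). apply ex_RInt_g; auto.
Qed.

Lemma Phi_der c e k z s : 0 <= e -> s < 0 -> z < 0 ->
  is_derive (fun a => RInt (gfun c e k) a z) s (- gfun c e k s).
Proof.
  intros he hs hz.
  apply (is_derive_RInt' (V:=R_NormedModule) (gfun c e k) (fun a => RInt (gfun c e k) a z) s z).
  - assert (hp : 0 < - s / 2) by lra.
    exists (mkposreal _ hp). intros y hy. unfold ball in hy; simpl in hy; unfold AbsRing_ball in hy; simpl in hy.
    unfold abs, minus, plus, opp in hy; simpl in hy.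
    apply (RInt_correct (V:=R_CompleteNormedModule)). apply ex_RInt_g; auto.
    apply Rabs_lt_between in hy. lra.
  - apply gfun_cont; auto.
Qed.

Lemma f12_eq beta gamma eps z s : s < 0 -> z < 0 -> 0 <= rpow eps (1/3) ->
  rpow eps (1/3) * rpow eps (1/3) = rpow eps (2/3) ->
  let e := rpow eps (2/3) in let d := rpow eps (1/3) in
  let P := RInt (gfun (c0 beta gamma) e (kappa gamma)) s z in
  f12 beta gamma eps z s =
   (1 / (4 * s * (1 - e * s)) * cos P - (- (d * sqrt (- s)) / (4 * s * (1 - e * s))) * sin P,
    1 / (4 * s * (1 - e * s)) * sin P + (- (d * sqrt (- s)) / (4 * s * (1 - e * s))) * cos P) /\
  f21 beta gamma eps z s =
   (1 / (4 * s * (1 - e * s)) * cos P - (- (d * sqrt (- s)) / (4 * s * (1 - e * s))) * sin P,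
    - (1 / (4 * s * (1 - e * s)) * sin P + (- (d * sqrt (- s)) / (4 * s * (1 - e * s))) * cos P)).
Proof.
  intros hs hz hd hde e d P.
  assert (he : 0 <= e) by (unfold e; rewrite <- hde; nra).
  unfold f12, f21. rewrite inner_eq by auto. fold e. fold P.
  unfold cexp. simpl. rewrite Ropp_0, exp_0, cos_neg, sin_neg.
  fold d.
  assert (hde' : e = d * d) by (unfold e, d; rewrite hde; auto).
  assert (hr : 0 < sqrt (- s)) by (apply sqrt_lt_R0; lra).
  assert (hsr : s = - (sqrt (- s) * sqrt (- s))) by (rewrite sqrt_sqrt; lra).
  set (r := sqrt (- s)) in *. clearbody r. set (C := cos P). set (S := sin P).
  clearbody C S P e d. subst e. rewrite hsr. clear hsr.
  split; apply injective_projections; simpl; field.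
  all: assert (ht : 0 < r * r) by nra; assert (hq : 0 <= (d * r) * (d * r)) by nra;
    assert (hq2 : 0 < (r * r) * (r * r)) by nra;
    assert (0 <= (r * r) * (r * r) * ((d * r) * (d * r))) by nra;
    repeat split; nra.
Qed.

Lemma inv_u32_mono u v : 0 < v -> v <= u -> / (u * sqrt u) <= / (v * sqrt v).
Proof.
  intros hv huv. apply Rinv_le_contravar. apply Rmult_lt_0_compat; auto. apply sqrt_lt_R0; auto.
  apply Rmult_le_compat; try lra. apply sqrt_pos. apply sqrt_le_1; lra.
Qed.

Lemma Ha_abs c q e x : 0 < c -> q <= 0 -> 0 <= e -> x < 0 ->
  Rabs (Hfun (- / (8 * c)) q e (3/2) x) <= / (8 * c) * / ((- x) * sqrt (- x)).
Proof.
  intros hc hq he hx. eapply Rle_trans. apply Hfun_bound; auto.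
  rewrite expm32 by lra. rewrite Rabs_Ropp, Rabs_right. lra.
  left; apply Rinv_0_lt_compat; lra.
Qed.

Lemma Hb_abs c d q e x : 0 < c -> q <= 0 -> 0 <= e -> x < 0 -> 0 <= d -> d * d * (- x) <= 1 ->
  Rabs (Hfun (d / (8 * c)) q e 1 x) <= / (8 * c) * / ((- x) * sqrt (- x)).
Proof.
  intros hc hq he hx hd hdx. eapply Rle_trans. apply Hfun_bound; auto.
  rewrite expm1 by lra. rewrite Rabs_right.
  2:{ unfold Rdiv. apply Rle_ge, Rmult_le_pos; auto. left; apply Rinv_0_lt_compat; lra. }
  assert (hr : 0 < sqrt (- x)) by (apply sqrt_lt_R0; lra).
  assert (hss : sqrt (- x) * sqrt (- x) = - x) by (apply sqrt_sqrt; lra).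
  assert (hdr : d * sqrt (- x) <= 1).
  { destruct (Rle_dec (d * sqrt (- x)) 1); auto. nra. }
  unfold Rdiv. 
  replace (d * / (8 * c) * / - x) with (/ (8 * c) * (d * sqrt (- x)) * / (- x * sqrt (- x))).
  2:{ field. split; lra. }
  assert (0 < / (8 * c)) by (apply Rinv_0_lt_compat; lra).
  assert (0 < / (- x * sqrt (- x))) by (apply Rinv_0_lt_compat; nra).
  set (A := / (8 * c)) in *. set (W := / (- x * sqrt (- x))) in *.
  assert (0 < A * W) by nra.
  replace (A * (d * sqrt (- x)) * W) with ((A * W) * (d * sqrt (- x))) by ring.
  replace (A * W) with ((A * W) * 1) at 2 by ring.
  apply Rmult_le_compat_l; lra.
Qed.

Lemma interval_main beta gamma eps z a b :
  0 < c0 beta gamma -> kappa gamma <= 1 ->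
  0 <= rpow eps (1/3) -> rpow eps (1/3) * rpow eps (1/3) = rpow eps (2/3) ->
  a <= b -> b < 0 -> z < 0 ->
  rpow eps (2/3) * (- a) <= 1 -> rpow eps (2/3) * (- b) <= 1 ->
  exists T : C, is_RInt (V:=C_R_CompleteNormedModule) (f12 beta gamma eps z) a b T /\
    is_RInt (V:=C_R_CompleteNormedModule) (f21 beta gamma eps z) a b (fst T, - snd T) /\
    Rabs (fst T) <= / (c0 beta gamma) * / ((- b) * sqrt (- b)) /\
    Rabs (snd T) <= / (c0 beta gamma) * / ((- b) * sqrt (- b)).
Proof.
  intros hc hk hd hde hab hb hz hea heb.
  assert (he : 0 <= rpow eps (2/3)) by (rewrite <- hde; nra).
  set (c := c0 beta gamma) in *. set (k := kappa gamma) in *.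
  set (e := rpow eps (2/3)) in *. set (d := rpow eps (1/3)) in *.
  set (q := k - 1).
  assert (hq : q <= 0) by (unfold q; lra).
  set (g := gfun c e k). set (Phi := fun x => RInt g x z).
  assert (hP : forall x, a <= x <= b -> is_derive Phi x (- g x)).
  { intros x hx. apply Phi_der; auto; lra. }
  assert (hg : forall x, a <= x <= b -> continuous g x).
  { intros x hx. apply gfun_cont; auto; lra. }
  set (Ka := - / (8 * c)). set (Kb := d / (8 * c)).
  destruct (comp_bound_gen Ka q e (3/2) a b Phi g sin cos is_derive_sin cont_cos btr_sin hab hb hq he ltac:(lra) hP hg) as [L1 [h1 b1]].
  destruct (comp_bound_gen Kb q e 1 a b Phi g (fun x => - cos x) sin dtr_mcos cont_sin btr_mcos hab hb hq he ltac:(lra) hP hg) as [L2 [h2 b2]].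
  destruct (comp_bound_gen Ka q e (3/2) a b Phi g (fun x => - cos x) sin dtr_mcos cont_sin btr_mcos hab hb hq he ltac:(lra) hP hg) as [L3 [h3 b3]].
  destruct (comp_bound_gen Kb q e 1 a b Phi g sin cos is_derive_sin cont_cos btr_sin hab hb hq he ltac:(lra) hP hg) as [L4 [h4 b4]].
  assert (hpt : forall x, a <= x <= b ->
     f12 beta gamma eps z x = (Hfun Ka q e (3/2) x * g x * cos (Phi x) - Hfun Kb q e 1 x * g x * sin (Phi x),
                               Hfun Ka q e (3/2) x * g x * sin (Phi x) + Hfun Kb q e 1 x * g x * cos (Phi x)) /\
     f21 beta gamma eps z x = (Hfun Ka q e (3/2) x * g x * cos (Phi x) - Hfun Kb q e 1 x * g x * sin (Phi x),
                               - (Hfun Ka q e (3/2) x * g x * sin (Phi x) + Hfun Kb q e 1 x * g x * cos (Phi x)))).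
  { intros x hx. assert (hx0 : x < 0) by lra.
    destruct (f12_eq beta gamma eps z x hx0 hz hd hde) as [e1 e2].
    rewrite e1, e2. fold c k e d.
    unfold g, Ka, Kb. replace k with (q + 1) by (unfold q; ring).
    rewrite <- Ha_id, <- Hb_id by auto. unfold Phi, g. replace (q + 1) with k by (unfold q; ring).
    split; reflexivity. }
  assert (hmm : forall x, Rmin a b < x < Rmax a b -> a <= x <= b).
  { intros x; rewrite Rmin_left, Rmax_right; lra. }
  exists (L1 - L2, L3 + L4). split; [|split; [|split]].
  - eapply is_RInt_ext. intros x hx; symmetry; apply (proj1 (hpt x (hmm x hx))).
    apply (is_RInt_fct_extend_pair (U:=R_NormedModule) (V:=R_NormedModule)); simpl.
    + apply (is_RInt_minus (V:=R_NormedModule) _ _ _ _ _ _ h1 h2).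
    + apply (is_RInt_plus (V:=R_NormedModule) _ _ _ _ _ _ h3 h4).
  - eapply is_RInt_ext. intros x hx; symmetry; apply (proj2 (hpt x (hmm x hx))).
    apply (is_RInt_fct_extend_pair (U:=R_NormedModule) (V:=R_NormedModule)); simpl.
    + apply (is_RInt_minus (V:=R_NormedModule) _ _ _ _ _ _ h1 h2).
    + apply (is_RInt_opp (V:=R_NormedModule)). apply (is_RInt_plus (V:=R_NormedModule) _ _ _ _ _ _ h3 h4).
  - assert (Wm : / (- a * sqrt (- a)) <= / (- b * sqrt (- b))) by (apply inv_u32_mono; lra).
    assert (A1 := Ha_abs c q e a hc hq he ltac:(lra)). assert (A2 := Ha_abs c q e b hc hq he ltac:(lra)).
    assert (B1 := Hb_abs c d q e a hc hq he ltac:(lra) hd ltac:(rewrite hde; exact hea)).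
    assert (B2 := Hb_abs c d q e b hc hq he ltac:(lra) hd ltac:(rewrite hde; exact heb)).
    fold Ka Kb in A1, A2, B1, B2.
    assert (0 < / (8 * c)) by (apply Rinv_0_lt_compat; lra).
    replace (/ c) with (8 * / (8 * c)) by (field; lra).
    simpl. unfold Rminus. eapply Rle_trans. apply Rabs_triang. rewrite Rabs_Ropp.
    set (W := / (- b * sqrt (- b))) in *. set (A := / (8 * c)) in *.
    assert (A * / (- a * sqrt (- a)) <= A * W) by (apply Rmult_le_compat_l; lra).
    lra.
  - assert (Wm : / (- a * sqrt (- a)) <= / (- b * sqrt (- b))) by (apply inv_u32_mono; lra).
    assert (A1 := Ha_abs c q e a hc hq he ltac:(lra)). assert (A2 := Ha_abs c q e b hc hq he ltac:(lra)).
    assert (B1 := Hb_abs c d q e a hc hq he ltac:(lra) hd ltac:(rewrite hde; exact hea)).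
    assert (B2 := Hb_abs c d q e b hc hq he ltac:(lra) hd ltac:(rewrite hde; exact heb)).
    fold Ka Kb in A1, A2, B1, B2.
    assert (0 < / (8 * c)) by (apply Rinv_0_lt_compat; lra).
    replace (/ c) with (8 * / (8 * c)) by (field; lra).
    simpl. eapply Rle_trans. apply Rabs_triang.
    set (W := / (- b * sqrt (- b))) in *. set (A := / (8 * c)) in *.
    assert (A * / (- a * sqrt (- a)) <= A * W) by (apply Rmult_le_compat_l; lra).
    lra.
Qed.
Lemma ballC (x y : C) eps : Rabs (fst y - fst x) < eps -> Rabs (snd y - snd x) < eps ->
  ball (M:=C_R_CompleteNormedModule) x eps y.
Proof. intros; unfold ball; simpl. unfold prod_ball; simpl. unfold ball; simpl. unfold AbsRing_ball. simpl. auto. Qed.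
Lemma ballC_inv (x y : C) eps : ball (M:=C_R_CompleteNormedModule) x eps y ->
  Rabs (fst y - fst x) < eps /\ Rabs (snd y - snd x) < eps.
Proof. intros h; unfold ball in h; simpl in h. unfold prod_ball in h; simpl in h. unfold ball in h; simpl in h. unfold AbsRing_ball in h. simpl in h. auto. Qed.

Lemma improper_gen (f : R -> C) (z : R) (B : R -> R) :
  (forall a b, a <= b <= z -> exists T : C, is_RInt (V:=C_R_CompleteNormedModule) f a b T /\
       Rabs (fst T) <= B b /\ Rabs (snd T) <= B b) ->
  (forall eps, 0 < eps -> exists M, forall x, x <= M -> B x < eps) ->
  exists l : C, is_RInt_gen (V:=C_R_CompleteNormedModule) f (Rbar_locally m_infty) (at_point z) l /\
       Rabs (fst l) <= B z /\ Rabs (snd l) <= B z.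
Proof.
  intros hI hB.
  set (F := fun a => RInt (V:=C_R_CompleteNormedModule) f a z).
  assert (hF : forall a, a <= z -> is_RInt (V:=C_R_CompleteNormedModule) f a z (F a) /\
      Rabs (fst (F a)) <= B z /\ Rabs (snd (F a)) <= B z).
  { intros a ha. destruct (hI a z ltac:(lra)) as [T [hT [b1 b2]]].
    unfold F. rewrite (is_RInt_unique _ _ _ _ hT). auto. }
  clearbody F.
  assert (hch : forall u v, u <= v <= z -> Rabs (fst (F v) - fst (F u)) <= B v /\ Rabs (snd (F v) - snd (F u)) <= B v).
  { intros u v huv. destruct (hI u v huv) as [T [hT [b1 b2]]].
    destruct (hF v ltac:(lra)) as [hv _]. destruct (hF u ltac:(lra)) as [hu _].
    pose proof (is_RInt_Chasles _ _ _ _ _ _ hT hv) as hc.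
    pose proof (is_RInt_unique _ _ _ _ hc) as e1. pose proof (is_RInt_unique _ _ _ _ hu) as e2.
    assert (Fu : F u = plus T (F v)) by (rewrite <- e2; exact e1).
    rewrite Fu. unfold plus; simpl. unfold plus; simpl.
    split; [replace (fst (F v) - (fst T + fst (F v))) with (- fst T) by ring
           |replace (snd (F v) - (snd T + snd (F v))) with (- snd T) by ring]; rewrite Rabs_Ropp; auto. }
  assert (hlim : exists l, filterlim F (Rbar_locally m_infty) (locally l)).
  { apply (filterlim_locally_cauchy (F := Rbar_locally m_infty) F).
    intros eps. destruct (hB eps (cond_pos eps)) as [M hM].
    exists (fun x => x < Rmin z M). split.
    - exists (Rmin z M). auto.
    - intros u v hu hv. apply ballC.
      + destruct (Rle_lt_dec u v).
        * assert (hz : v <= z) by (pose proof (Rmin_l z M); lra).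
          destruct (hch u v ltac:(lra)) as [c1 _]. eapply Rle_lt_trans; [exact c1|]. apply hM.
          pose proof (Rmin_r z M); lra.
        * assert (hz : u <= z) by (pose proof (Rmin_l z M); lra).
          destruct (hch v u ltac:(lra)) as [c1 _]. rewrite Rabs_minus_sym. eapply Rle_lt_trans; [exact c1|]. apply hM.
          pose proof (Rmin_r z M); lra.
      + destruct (Rle_lt_dec u v).
        * assert (hz : v <= z) by (pose proof (Rmin_l z M); lra).
          destruct (hch u v ltac:(lra)) as [_ c1]. eapply Rle_lt_trans; [exact c1|]. apply hM.
          pose proof (Rmin_r z M); lra.
        * assert (hz : u <= z) by (pose proof (Rmin_l z M); lra).
          destruct (hch v u ltac:(lra)) as [_ c1]. rewrite Rabs_minus_sym. eapply Rle_lt_trans; [exact c1|]. apply hM.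
          pose proof (Rmin_r z M); lra. }
  destruct hlim as [l hl].
  exists l. split; [|split].
  - intros P hP. specialize (hl P hP). destruct hl as [M hM].
    apply (Filter_prod _ _ _ (fun a => a < Rmin z M) (fun b => b = z)).
    + exists (Rmin z M). auto.
    + reflexivity.
    + intros x y hx hy. subst y. simpl. exists (F x). split.
      * apply hF. pose proof (Rmin_l z M); lra.
      * apply hM. pose proof (Rmin_r z M); lra.
  - destruct (Rle_lt_dec (Rabs (fst l)) (B z)) as [h|h]; auto. exfalso.
    assert (he : 0 < Rabs (fst l) - B z) by lra.
    destruct (hl (ball l (mkposreal _ he)) (locally_ball l (mkposreal _ he))) as [M hM].
    set (x := Rmin z M - 1).
    assert (hx : x < M) by (unfold x; pose proof (Rmin_r z M); lra).
    destruct (ballC_inv _ _ _ (hM x hx)) as [b1 _]. simpl in b1.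
    destruct (hF x ltac:(unfold x; pose proof (Rmin_l z M); lra)) as [_ [c1 _]].
    pose proof (Rabs_triang_inv (fst l) (fst (F x))). rewrite Rabs_minus_sym in b1. lra.
  - destruct (Rle_lt_dec (Rabs (snd l)) (B z)) as [h|h]; auto. exfalso.
    assert (he : 0 < Rabs (snd l) - B z) by lra.
    destruct (hl (ball l (mkposreal _ he)) (locally_ball l (mkposreal _ he))) as [M hM].
    set (x := Rmin z M - 1).
    assert (hx : x < M) by (unfold x; pose proof (Rmin_r z M); lra).
    destruct (ballC_inv _ _ _ (hM x hx)) as [_ b1]. simpl in b1.
    destruct (hF x ltac:(unfold x; pose proof (Rmin_l z M); lra)) as [_ [_ c1]].
    pose proof (Rabs_triang_inv (snd l) (snd (F x))). rewrite Rabs_minus_sym in b1. lra.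
Qed.

Lemma rpow_facts eps : 0 <= eps -> 0 <= rpow eps (1/3) /\ rpow eps (1/3) * rpow eps (1/3) = rpow eps (2/3).
Proof.
  intros he. unfold rpow. destruct (Rle_dec eps 0).
  - split; lra.
  - split. left; apply Rpower_pos. rewrite <- Rpower_plus. f_equal. field.
Qed.

Lemma Rpower32 u : 0 < u -> Rpower u (3/2) = u * sqrt u.
Proof.
  intros hu. replace (3/2) with (1 + /2) by field. rewrite Rpower_plus, Rpower_1, Rpower_sqrt; auto.
Qed.

Lemma final_ineq (x y : C) c z : 0 < c -> z <= -1 ->
  Rabs (fst x) <= / c * / ((- z) * sqrt (- z)) -> Rabs (snd x) <= / c * / ((- z) * sqrt (- z)) ->
  Rabs (fst y) <= / c * / ((- z) * sqrt (- z)) -> Rabs (snd y) <= / c * / ((- z) * sqrt (- z)) ->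
  antidiag_norm x y < 2 / c / Rpower (Rabs z) (3/2).
Proof.
  intros hc hz h1 h2 h3 h4.
  rewrite Rabs_left by lra. rewrite Rpower32 by lra.
  set (B := / c * / ((- z) * sqrt (- z))) in *.
  assert (hs : 0 < sqrt (- z)) by (apply sqrt_lt_R0; lra).
  assert (hB : 0 < B) by (unfold B; apply Rmult_lt_0_compat; apply Rinv_0_lt_compat; nra).
  assert (hs2 : sqrt 2 < 2).
  { pose proof (sqrt_sqrt 2 ltac:(lra)). pose proof (sqrt_pos 2). nra. }
  assert (hx : Cmod x < 2 * B).
  { eapply Rle_lt_trans. apply Cmod_2Rmax. apply Rmax_case_strong; intros _; 
    pose proof (sqrt_pos 2); pose proof (Rabs_pos (fst x)); pose proof (Rabs_pos (snd x)); nra. }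
  assert (hy : Cmod y < 2 * B).
  { eapply Rle_lt_trans. apply Cmod_2Rmax. apply Rmax_case_strong; intros _; 
    pose proof (sqrt_pos 2); pose proof (Rabs_pos (fst y)); pose proof (Rabs_pos (snd y)); nra. }
  unfold antidiag_norm. replace (2 / c / (- z * sqrt (- z))) with (2 * B) by (unfold B; field; nra).
  apply Rmax_case; auto.
Qed.

Lemma B_small c : 0 < c -> forall eps, 0 < eps -> exists M, forall x, x <= M -> / c * / ((- x) * sqrt (- x)) < eps.
Proof.
  intros hc eps he. exists (- (1 + / (c * eps))). intros x hx.
  assert (hi : 0 < / (c * eps)) by (apply Rinv_0_lt_compat; nra).
  assert (hu : 1 < - x) by lra.
  assert (hs : 1 <= sqrt (- x)) by (rewrite <- sqrt_1; apply sqrt_le_1; lra).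
  assert (hp : / (c * eps) < (- x) * sqrt (- x)) by nra.
  apply (Rmult_lt_reg_l c); auto. rewrite <- Rmult_assoc, Rinv_r, Rmult_1_l by lra.
  apply (Rmult_lt_reg_l ((- x) * sqrt (- x))). nra.
  rewrite Rinv_r by nra.
  apply (Rmult_lt_reg_l (/ (c * eps))). auto.
  replace (/ (c * eps) * (- x * sqrt (- x) * (c * eps))) with (- x * sqrt (- x)) by (field; nra).
  lra.
Qed.

Theorem lemma8p6 (beta gamma eta : R) (hbeta : 0 < beta)
  (hgamma : 1 / 2 < gamma /\ gamma < 1) (heta : 0 < eta) :
  exists cIV : R, 0 < cIV /\
    forall eps z : R, 0 <= eps < eta -> in_range eps z ->
      exists T12 T21 : C,
        is_T eps z (f12 beta gamma eps z) T12 /\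
        is_T eps z (f21 beta gamma eps z) T21 /\
        antidiag_norm T12 T21 < cIV / Rpower (Rabs z) (3 / 2).
Proof.
  assert (hc : 0 < c0 beta gamma).
  { unfold c0. apply Rmult_lt_0_compat. apply Rpower_pos. apply Rinv_0_lt_compat; lra. }
  assert (hk : kappa gamma <= 1).
  { unfold kappa. assert (1 / (2 * gamma) >= 1/2).
    { apply Rle_ge. unfold Rdiv. rewrite !Rmult_1_l. apply Rinv_le_contravar; lra. }
    lra. }
  exists (2 / c0 beta gamma). split. { unfold Rdiv; apply Rmult_lt_0_compat; [lra|]. apply Rinv_0_lt_compat; auto. }
  intros eps z heps [hz hr].
  destruct (rpow_facts eps ltac:(lra)) as [hd hde].
  unfold is_T. destruct (Req_EM_T eps 0) as [e0|e0].
  - assert (hI12 : forall a b, a <= b <= z -> exists T : C, is_RInt (V:=C_R_CompleteNormedModule) (f12 beta gamma eps z) a b T /\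
       Rabs (fst T) <= / c0 beta gamma * / ((- b) * sqrt (- b)) /\ Rabs (snd T) <= / c0 beta gamma * / ((- b) * sqrt (- b))).
    { intros a b hab. assert (hez : rpow eps (2/3) = 0) by (subst eps; unfold rpow; destruct (Rle_dec 0 0); lra).
      destruct (interval_main beta gamma eps z a b hc hk hd hde ltac:(lra) ltac:(lra) ltac:(lra)
        ltac:(rewrite hez; lra) ltac:(rewrite hez; lra)) as [T [h1 [h2 [b1 b2]]]].
      exists T; auto. }
    assert (hI21 : forall a b, a <= b <= z -> exists T : C, is_RInt (V:=C_R_CompleteNormedModule) (f21 beta gamma eps z) a b T /\
       Rabs (fst T) <= / c0 beta gamma * / ((- b) * sqrt (- b)) /\ Rabs (snd T) <= / c0 beta gamma * / ((- b) * sqrt (- b))).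
    { intros a b hab. assert (hez : rpow eps (2/3) = 0) by (subst eps; unfold rpow; destruct (Rle_dec 0 0); lra).
      destruct (interval_main beta gamma eps z a b hc hk hd hde ltac:(lra) ltac:(lra) ltac:(lra)
        ltac:(rewrite hez; lra) ltac:(rewrite hez; lra)) as [T [h1 [h2 [b1 b2]]]].
      exists (fst T, - snd T); simpl. rewrite Rabs_Ropp. auto. }
    destruct (improper_gen _ z _ hI12 (B_small _ hc)) as [l1 [g1 [c1 c2]]].
    destruct (improper_gen _ z _ hI21 (B_small _ hc)) as [l2 [g2 [c3 c4]]].
    exists l1, l2. split; [exact g1|split; [exact g2|]].
    apply final_ineq; auto.
  - destruct hr as [hr|hr]; [contradiction|].
    assert (hep : 0 < eps) by lra.
    assert (hepos : 0 < rpow eps (2/3)) by (unfold rpow; destruct (Rle_dec eps 0); [lra|apply Rpower_pos]).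
    assert (hZ : rpow eps (2/3) * Z2 eps = 1/5) by (unfold Z2; field; lra).
    destruct (interval_main beta gamma eps z (- Z2 eps) z hc hk hd hde ltac:(lra) ltac:(lra) ltac:(lra)
        ltac:(lra) ltac:(nra)) as [T [h1 [h2 [b1 b2]]]].
    exists T, (fst T, - snd T). split; [exact h1|split; [exact h2|]].
    apply final_ineq; simpl; try rewrite Rabs_Ropp; auto.
Qed.
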